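(* Suppose that for each $r,k\in\mathbb{N}$ with $k\le r$, $\{Y^{(k)}_{r,i}:i\in\{1,\dots,k\}\}$ is a collection of independent random variables. Suppose there exist $\alpha\in(0,1]$, $c>0$, $r_0$ and $\theta_0$ such that for all $r,k\in\mathbb{N}$, $i\in\{1,\dots,k\}$ and $\theta\in\mathbb{R}$ with $r/k>r_0$ and $\theta>\theta_0$, $$\mathbb{P}\left(Y^{(k)}_{r,i}>\theta (r/k)^{1/3}\right)\le\exp(-c\theta^\alpha).$$ Finally, let $Y_r$ be a random variable such that $Y_r\le\sum_{i=1}^kY^{(k)}_{r,i}$ for every $k\in\mathbb{N}$ with $r/k>r_0$. Then there exist $\tilde\theta_0=\tilde\theta_0(c,\alpha,\theta_0,r_0)$ and $c'=c'(c,\alpha,\theta_0,r_0)>0$ such that for all $\tilde\theta_0<\theta<r^{2/3}$ and $r>r_0$, $$\mathbb{P}\left(Y_r>\theta r^{1/3}\right)\le\exp\left(-c'\theta^{3\alpha/2}\right).$$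
   Context: Convention: quantities such as $k$ and $r/k$ that are required to be integers are rounded down when expressed as real numbers. *)

(* Defs.v *)
From HB Require Import structures.
From mathcomp Require Import all_boot all_order all_algebra.
From mathcomp Require Import all_classical all_reals all_analysis.
Set Implicit Arguments. Unset Strict Implicit. Unset Printing Implicit Defensive.
Import Order.TTheory GRing.Theory Num.Theory.
Local Open Scope classical_set_scope.
Local Open Scope ring_scope.

(* Mutual independence of a finite family (X_i)_{i < n} of real random
   variables: for every family of Borel sets (B_i), the probability of the
   joint event is the product of the probabilities.  (Taking B_i = setT
   for i outside a subfamily recovers the product rule for subfamilies.) *)
Definition mutually_independent d (T : measurableType d) (R : realType)
  (P : probability T R) (n : nat) (X : 'I_n -> T -> R) : Prop :=
  forall B : 'I_n -> set R, (forall i, measurable (B i)) ->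
    P (\bigcap_(i in [set: 'I_n]) (X i @^-1` B i)) =
    (\prod_(i < n) P (X i @^-1` B i))%E.

(* Main.v *)
Require Import Defs.
From HB Require Import structures.
From mathcomp Require Import all_boot all_order all_algebra.
From mathcomp Require Import all_classical all_reals all_analysis.
From mathcomp Require Import ring lra zify.
Import Order.TTheory GRing.Theory Num.Theory.
Local Open Scope classical_set_scope.
Local Open Scope ring_scope.


Section Real.
Variable R : realType.

Lemma ln_le_id (y : R) : 0 < y -> ln y <= y.
Proof.
move=> y0; have h : -1 < y - 1 by lra.
have := le_ln1Dx h; rewrite (_ : 1 + (y - 1) = y); last by rewrite addrC subrK.
lra.
Qed.

Lemma poly_stretch (a c y : R) : 0 < a -> 0 < c -> 0 < y ->
  y ^+ 3 * expR (- (c / 2 * y `^ a)) <= expR (18 / (a ^+ 2 * c)).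
Proof.
move=> a0 c0 y0.
set v := y `^ (a / 2).
have v0 : 0 < v by rewrite /v powR_gt0.
have hya : y `^ a = v ^+ 2.
  by rewrite /v -powR_mulrn ?powR_ge0 // -powRrM; congr (_ `^ _); rewrite mulr2n; field.
have hln : ln y = (2 / a) * ln v.
  rewrite /v ln_powR mulrA (_ : 2 / a * (a / 2) = 1) ?mul1r //.
  by field; apply/lt0r_neq0.
have hy3 : y ^+ 3 = expR (3%:R * ln y).
  by rewrite expRM_natl lnK //; rewrite posrE.
rewrite hy3 -expRD ler_expR hya hln.
have hl := @ln_le_id v v0.
have h1 : 3%:R * (2 / a * ln v) <= (6 / a) * v.
  have : 0 < 2 / a by rewrite divr_gt0.
  move=> h2a; rewrite mulrA; have -> : (3%:R * (2 / a)) = 6 / a by rewrite mulrA; congr (_ / _); rewrite -natrM.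
  rewrite ler_pM2l //; rewrite divr_gt0 //.
have e : 18 / (a ^+ 2 * c) - (6 / a * v - c / 2 * v ^+ 2) = c / 2 * (v - 6 / (a * c)) ^+ 2.
  by field; apply/andP; split; apply/lt0r_neq0.
have : 0 <= c / 2 * (v - 6 / (a * c)) ^+ 2 by apply: mulr_ge0; [lra | apply: sqr_ge0].
rewrite -e; lra.
Qed.

Lemma expR_sub1 (y : R) : expR y - 1 <= y * expR y.
Proof.
have h := expR_ge1Dx (- y).
have hp : 0 < expR y := expR_gt0 y.
have : (1 + - y) * expR y <= expR (- y) * expR y by rewrite ler_pM2r.
rewrite -expRD addNr expR0 mulrDl mul1r mulNr; lra.
Qed.

Lemma inv_sq_sum n : \sum_(j < n) ((j.+1)%:R ^+ 2)^-1 <= 2 :> R.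
Proof.
suff : forall n, (0 < n)%N -> \sum_(j < n) ((j.+1)%:R ^+ 2)^-1 <= 2 - (n%:R)^-1 :> R.
  case: n => [|n]; first by rewrite big_ord0 => _; lra.
  move=> /(_ n.+1 isT) h; apply: (le_trans h).
  by rewrite gerBl invr_ge0.
clear n; elim=> [//|n IH] _.
case: n IH => [_|n IH]; first by rewrite big_ord1 /= expr1n invr1; lra.
have {}IH := IH isT.
rewrite big_ord_recr /=.
set m : R := n.+1%:R.
have m1 : 1 <= m by rewrite /m ler1n.
have -> : (n.+2%:R : R) = m + 1 by rewrite /m -natr1.
have hh : ((m + 1) ^+ 2)^-1 <= m^-1 - (m + 1)^-1.
  have -> : m^-1 - (m + 1)^-1 = (m * (m + 1))^-1.
    by field; apply/andP; split; apply/lt0r_neq0; lra.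
  rewrite lef_pV2 ?posrE; [| apply: exprn_gt0; lra | apply: mulr_gt0; lra].
  rewrite expr2 ler_pM2r; lra.
apply: le_trans (lerD IH hh) _.
by rewrite addrA subrK.
Qed.


Lemma stretch_inv (a c y : R) : 0 < a -> 0 < c -> 0 < y ->
  y * expR (- (c / 2 * y `^ a)) <= expR (18 / (a ^+ 2 * c)) / y ^+ 2.
Proof.
move=> a0 c0 y0; have y2 : 0 < y ^+ 2 by apply: exprn_gt0.
rewrite ler_pdivlMr //.
have -> : y * expR (- (c / 2 * y `^ a)) * y ^+ 2 = y ^+ 3 * expR (- (c / 2 * y `^ a)).
  by rewrite mulrC mulrA -exprSr.
exact: poly_stretch.
Qed.

Lemma term_bound (a c u0 lam p : R) (m : nat) : 0 < a -> 0 < c -> 1 <= u0 ->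
  0 <= lam -> (0 < m)%N -> 0 <= p ->
  p <= expR (- (c * (m%:R * u0) `^ a)) ->
  lam * (m.+1%:R * u0) <= c / 2 * (m%:R * u0) `^ a ->
  p * (expR (lam * (m.+1%:R * u0)) - 1) <=
    2 * lam * expR (18 / (a ^+ 2 * c)) / (m%:R ^+ 2).
Proof.
move=> a0 c0 u1 l0 m0 p0 hp hl.
set y := m%:R * u0.
have m1 : 1 <= m%:R :> R by rewrite ler1n.
have y1 : m%:R <= y by rewrite /y ler_peMr //; lra.
have yp : 0 < y by lra.
set w := m.+1%:R * u0.
rewrite -/y -/w in hl hp.
have wy : w <= 2 * y by rewrite /w /y mulrA ler_pM2r ?(lt_le_trans ltr01) // -natrM ler_nat; lia.
have e1 := expR_sub1 (lam * w).
have h1 : p * (expR (lam * w) - 1) <= expR (- (c * y `^ a)) * (lam * w * expR (lam * w)).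
  apply: le_trans (ler_wpM2l p0 e1) _; apply: ler_wpM2r => //.
  apply: mulr_ge0; last exact: expR_ge0.
  by apply: mulr_ge0 => //; rewrite /w; apply: mulr_ge0 => //; lra.
apply: le_trans h1 _.
have h2 : expR (- (c * y `^ a)) * (lam * w * expR (lam * w)) <=
          lam * w * expR (- (c / 2 * y `^ a)).
  have -> : expR (- (c * y `^ a)) * (lam * w * expR (lam * w)) =
    lam * w * (expR (lam * w) * expR (- (c * y `^ a))) by ring.
  rewrite -expRD ler_wpM2l //; first by apply: mulr_ge0 => //; rewrite /w; apply: mulr_ge0 => //; lra.
  rewrite ler_expR; lra.
apply: le_trans h2 _.
have h3 : lam * w * expR (- (c / 2 * y `^ a)) <= 2 * lam * (y * expR (- (c / 2 * y `^ a))).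
  have -> : 2 * lam * (y * expR (- (c / 2 * y `^ a))) = lam * (2 * y) * expR (- (c / 2 * y `^ a)) by ring.
  by apply: ler_wpM2r; [exact: expR_ge0 | apply: ler_wpM2l].
apply: le_trans h3 _.
have -> : 2 * lam * expR (18 / (a ^+ 2 * c)) / m%:R ^+ 2 =
  (2 * lam) * (expR (18 / (a ^+ 2 * c)) / m%:R ^+ 2) by rewrite mulrA.
apply: ler_wpM2l; first lra.
apply: le_trans (stretch_inv a c y a0 c0 yp) _.
apply: ler_wpM2l; first exact: expR_ge0.
rewrite lef_pV2 ?posrE ?exprn_gt0 //; try lra.
rewrite ler_sqr ?nnegrE; lra.
Qed.


Definition Kc (a c u0 : R) := u0 * expR (c * u0 / 4) + 4 * expR (18 / (a ^+ 2 * c)).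

Lemma factor_bound (a c u0 lam : R) (J : nat) (p : nat -> R) :
  0 < a -> 0 < c -> 1 <= u0 -> 0 <= lam -> lam <= c / 4 ->
  (forall j, 0 <= p j) -> \sum_(j < J) p j <= 1 ->
  (forall j, (0 < j < J)%N -> p j <= expR (- (c * (j%:R * u0) `^ a))) ->
  (forall j, (0 < j < J)%N -> lam * (j.+1%:R * u0) <= c / 2 * (j%:R * u0) `^ a) ->
  \sum_(j < J) p j * expR (lam * (j.+1%:R * u0)) <= 1 + lam * Kc a c u0.
Proof.
move=> a0 c0 u1 l0 lc p0 ps hp hl.
have -> : \sum_(j < J) p j * expR (lam * (j.+1%:R * u0)) =
  \sum_(j < J) p j + \sum_(j < J) p j * (expR (lam * (j.+1%:R * u0)) - 1).
  by rewrite -big_split /=; apply: eq_bigr => j _; ring.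
suff : \sum_(j < J) p j * (expR (lam * (j.+1%:R * u0)) - 1) <= lam * Kc a c u0 by lra.
case: J ps hp hl => [|J] ps hp hl.
  rewrite big_ord0 /Kc; apply: mulr_ge0 => //; apply: addr_ge0; apply: mulr_ge0;
    try exact: expR_ge0; lra.
rewrite big_ord_recl /=.
have p01 : p 0%N <= 1.
  apply: le_trans ps; rewrite big_ord_recl /= lerDl; exact: sumr_ge0.
have t0 : p 0%N * (expR (lam * (1%:R * u0)) - 1) <= lam * (u0 * expR (c * u0 / 4)).
  rewrite mul1r.
  have e1 := expR_sub1 (lam * u0).
  have e0 : 0 <= expR (lam * u0) - 1.
    have := expR_ge1Dx (lam * u0); have : 0 <= lam * u0 by apply: mulr_ge0 => //; lra.
    lra.
  apply: le_trans (ler_wpM2r e0 p01) _; rewrite mul1r; apply: le_trans e1 _.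
  rewrite -mulrA; apply: ler_wpM2l => //; apply: ler_wpM2l; first lra.
  rewrite ler_expR mulrAC; apply: ler_wpM2r; lra.
have t1 : \sum_(i < J) p (bump 0 i) * (expR (lam * ((bump 0 i).+1%:R * u0)) - 1) <=
    \sum_(i < J) 2 * lam * expR (18 / (a ^+ 2 * c)) / ((i.+1)%:R ^+ 2).
  apply: ler_sum => i _; rewrite /bump /= add1n.
  apply: term_bound => //; [apply: hp | apply: hl]; rewrite /= ltnS ltn_ord //.
have t2 : \sum_(i < J) 2 * lam * expR (18 / (a ^+ 2 * c)) / ((i.+1)%:R ^+ 2) <=
    lam * (4 * expR (18 / (a ^+ 2 * c))).
  rewrite -mulr_sumr.
  have -> : lam * (4 * expR (18 / (a ^+ 2 * c))) = (2 * lam * expR (18 / (a ^+ 2 * c))) * 2 by ring.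
  apply: ler_wpM2l; first by apply: mulr_ge0; [lra | exact: expR_ge0].
  exact: inv_sq_sum.
rewrite /Kc mulrDr; lra.
Qed.


Lemma powR_anti (x y b : R) : 0 < x -> x <= y -> b <= 0 -> y `^ b <= x `^ b.
Proof.
move=> x0 xy b0.
have -> : b = - (- b) by rewrite opprK.
rewrite [y `^ _]powRN [x `^ _]powRN lef_pV2 ?posrE ?powR_gt0 //; try lra.
apply: ge0_ler_powR; rewrite ?nnegrE; lra.
Qed.

Lemma lam_bounds (a c u0 : R) (J : nat) : 0 < a <= 1 -> 0 < c -> 1 <= u0 -> (0 < J)%N ->
  let lam := c / 4 * (J%:R * u0) `^ (a - 1) in
  [/\ 0 <= lam, lam <= c / 4 &
   forall j, (0 < j < J)%N -> lam * (j.+1%:R * u0) <= c / 2 * (j%:R * u0) `^ a].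
Proof.
move=> /andP[a0 a1] c0 u1 J0 lam.
have J1 : 1 <= J%:R :> R by rewrite ler1n.
have Ju : 1 <= J%:R * u0 by rewrite -[1]mulr1; apply: ler_pM => //; lra.
split.
- by apply: mulr_ge0; [lra | exact: powR_ge0].
- rewrite /lam -[X in _ <= X]mulr1; apply: ler_wpM2l; first lra.
  apply: le_trans (_ : _ <= 1 `^ (a - 1)) _; last by rewrite powR1.
  by apply: powR_anti => //; lra.
- move=> j /andP[j0 jJ].
  have j1 : 1 <= j%:R :> R by rewrite ler1n.
  have ju : 1 <= j%:R * u0 by rewrite -[1]mulr1; apply: ler_pM => //; lra.
  have jJu : j%:R * u0 <= J%:R * u0 by apply: ler_wpM2r; [lra | rewrite ler_nat ltnW].
  have h1 : (J%:R * u0) `^ (a - 1) <= (j%:R * u0) `^ (a - 1) by apply: powR_anti => //; lra.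
  have h2 : j.+1%:R * u0 <= 2 * (j%:R * u0).
    by rewrite mulrA; apply: ler_wpM2r; [lra | rewrite -natrM ler_nat; lia].
  have h3 : (j%:R * u0) `^ a = (j%:R * u0) `^ (a - 1) * (j%:R * u0).
    rewrite -{3}(@powRr1 _ (j%:R * u0)); last lra.
    by rewrite -powRD ?subrK //; apply/implyP => _; apply: lt0r_neq0; lra.
  rewrite h3 /lam.
  have hp : 0 <= (J%:R * u0) `^ (a - 1) by exact: powR_ge0.
  have hq : 0 <= (j%:R * u0) `^ (a - 1) by exact: powR_ge0.
  apply: le_trans (_ : c / 4 * (J%:R * u0) `^ (a - 1) * (2 * (j%:R * u0)) <= _).
    apply: ler_wpM2l => //; apply: mulr_ge0 => //; lra.
  have -> : c / 4 * (J%:R * u0) `^ (a - 1) * (2 * (j%:R * u0)) =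
    c / 2 * ((J%:R * u0) `^ (a - 1) * (j%:R * u0)) by field.
  rewrite ler_pM2l; last lra.
  apply: ler_wpM2r => //; lra.
Qed.


Lemma real_LD (k J : nat) (p : 'I_k -> nat -> R) (w : nat -> R) (lam x K : R) :
  0 <= lam -> (forall i j, 0 <= p i j) ->
  (forall i, \sum_(j < J) p i j * expR (lam * w j) <= 1 + lam * K) ->
  \sum_(f : {ffun 'I_k -> 'I_J} | x < \sum_(i < k) w (f i)) \prod_(i < k) p i (f i)
    <= expR (- (lam * x) + lam * K * k%:R).
Proof.
move=> l0 p0 hs.
apply: le_trans (_ : _ <= \sum_(f : {ffun 'I_k -> 'I_J})
   (\prod_(i < k) (p i (f i) * expR (lam * w (f i)))) * expR (- (lam * x))) _.
  rewrite big_mkcond /=; apply: ler_sum => f _; case: ifP => hc.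
    rewrite big_split /= -mulrA -[X in X <= _]mulr1; apply: ler_wpM2l.
      by apply: prodr_ge0 => i _.
    rewrite -expR_sum -expRD -mulr_sumr.
    have : 0 <= lam * (\sum_(i < k) w (f i)) + - (lam * x).
      by rewrite -mulrN -mulrDr; apply: mulr_ge0 => //; rewrite subr_ge0 ltW.
    move=> h; have := expR_ge1Dx (lam * (\sum_(i < k) w (f i)) + - (lam * x)); lra.
  apply: mulr_ge0; last exact: expR_ge0.
  by apply: prodr_ge0 => i _; apply: mulr_ge0 => //; exact: expR_ge0.
rewrite -mulr_suml -(bigA_distr_bigA (fun (i : 'I_k) (j : 'I_J) => p i j * expR (lam * w j))) /=.
rewrite expRD mulrC; apply: ler_wpM2l; first exact: expR_ge0.
apply: le_trans (_ : _ <= \prod_(i < k) expR (lam * K)) _.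
  apply: ler_prod => i _; apply/andP; split.
    by apply: sumr_ge0 => j _; apply: mulr_ge0 => //; exact: expR_ge0.
  apply: le_trans (hs i) _; have := expR_ge1Dx (lam * K); lra.
by rewrite prodr_const card_ord -expRM_natr.
Qed.

End Real.
Arguments Kc {R}.



Section Prob.
Context d (T : measurableType d) (R : realType) (P : probability T R).

Lemma union_bound (I : Type) (s : seq I) (Pr : pred I) (A : I -> set T) :
  (forall i, measurable (A i)) ->
  (P (\big[setU/set0]_(i <- s | Pr i) A i) <= \sum_(i <- s | Pr i) P (A i))%E.
Proof.
move=> mA; elim: s => [|a s IH]; first by rewrite !big_nil measure0.
rewrite !big_cons; case: (Pr a) => //.
apply: le_trans (measureU2 _ _ _) _ => //; first exact: bigsetU_measurable.
exact: leeD.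
Qed.

Definition lvl (a : R) (j : nat) : set R :=
  if j == 0%N then [set` `]-oo, a]] else [set` `]a * j%:R, a * j.+1%:R]].

Lemma lvl_measurable a j : measurable (lvl a j).
Proof. by rewrite /lvl; case: ifP => _; exact: measurable_itv. Qed.

Lemma partition_sum (X : {RV P >-> R}) (a : R) (n : nat) : 0 <= a ->
  (\sum_(j < n.+1) P (X @^-1` lvl a j) = P (X @^-1` [set` `]-oo, (a * n.+1%:R)%R]]))%E.
Proof.
move=> a0; elim: n => [|n IH].
  by rewrite big_ord1 /lvl /= mulr1.
rewrite big_ord_recr /= IH /lvl /= -measureU.
- have hn : a * n.+1%:R <= a * n.+2%:R by apply: ler_wpM2l => //; rewrite ler_nat.
  congr (P _); apply/seteqP; split => w /=; rewrite !in_itv /=.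
  + case=> [h|/andP[_ h]] //; exact: le_trans h hn.
  + by move=> h; case: (leP (X w) (a * n.+1%:R)) => h'; [left | right; apply/andP].
- exact: measurable_funPTI (measurable_itv _).
- exact: measurable_funPTI (measurable_itv _).
- apply/seteqP; split => w //=; rewrite !in_itv /= => -[h /andP[h' _]].
  by move: (lt_le_trans h' h); rewrite ltxx.
Qed.



Lemma in_bigsetU (I : eqType) (s : seq I) (Pr : pred I) (F : I -> set T) i w :
  i \in s -> Pr i -> F i w -> (\big[setU/set0]_(j <- s | Pr j) F j) w.
Proof.
elim: s => [//|a s IH]; rewrite in_cons big_cons => /orP[/eqP <-|hi] hP hF.
  by rewrite hP; left.
by case: (Pr a); [right|]; apply: IH.
Qed.

Lemma level_exists (a y : R) (n : nat) : 0 <= a -> y <= a * n.+1%:R ->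
  exists j : 'I_n.+1, lvl a j y.
Proof.
move=> a0; elim: n => [|n IH] hy.
  by exists ord0; rewrite /lvl /= in_itv /= -[a]mulr1.
case: (leP y (a * n.+1%:R)) => h.
  by have [j hj] := IH h; exists (widen_ord (leqnSn _) j).
by exists ord_max; rewrite /lvl /= in_itv /= h hy.
Qed.

Lemma lvl_le (a y : R) (j : nat) : lvl a j y -> y <= a * j.+1%:R.
Proof.
rewrite /lvl; case: ifP => [/eqP -> | _] /=; rewrite in_itv /=.
  by rewrite mulr1.
by case/andP.
Qed.

Lemma lvl_gt (a y : R) (j : nat) : (0 < j)%N -> lvl a j y -> a * j%:R < y.
Proof.
rewrite /lvl; case: ifP => [/eqP -> //| _] _ /=; rewrite in_itv /=.
by case/andP.
Qed.


Lemma meas_gt (X : {RV P >-> R}) (t : R) : measurable [set w | t < X w].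
Proof.
have -> : [set w | t < X w] = X @^-1` [set` `]t, +oo[] .
  by apply/seteqP; split => w /=; rewrite in_itv /= andbT.
exact: measurable_funPTI (measurable_itv _).
Qed.

Lemma LD (a c th0 : R) (k : nat) (X : 'I_k -> {RV P >-> R}) (s x : R) (J : nat) (E : set T) :
  0 < a <= 1 -> 0 < c -> 0 <= th0 -> 0 < s -> (0 < J)%N ->
  mutually_independent P (fun i => (X i : T -> R)) ->
  (forall i t, th0 < t -> (P [set w | (t * s < X i w)%R] <= (expR (- (c * t `^ a)))%:E)%E) ->
  measurable E -> (forall w, E w -> x * s < \sum_(i < k) X i w) ->
  (P E <= ((k%:R * expR (- (c * (J%:R * (th0 + 1)) `^ a)) +
     expR (- (c / 4 * (J%:R * (th0 + 1)) `^ (a - 1) * x) +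
       c / 4 * (J%:R * (th0 + 1)) `^ (a - 1) * Kc a c (th0 + 1) * k%:R)))%:E)%E.
Proof.
move=> ha c0 th00 s0 J0 indep tail mE hE.
set u0 := th0 + 1.
have u1 : 1 <= u0 by rewrite /u0; lra.
have uth : th0 < u0 by rewrite /u0; lra.
have us0 : 0 <= u0 * s by apply: mulr_ge0; lra.
case: J J0 => [//|J] _.
set lam := c / 4 * (J.+1%:R * u0) `^ (a - 1).
have [l0 l1 l2] := @lam_bounds R a c u0 J.+1 ha c0 u1 (ltn0Sn J).
rewrite -/lam in l0 l1 l2.
set A1 := \big[setU/set0]_(i < k) [set w | J.+1%:R * u0 * s < X i w].
set B := fun (i : 'I_k) (j : nat) => X i @^-1` lvl (u0 * s) j.
set A2 := \big[setU/set0]_(f : {ffun 'I_k -> 'I_J.+1} | x < \sum_(i < k) ((f i).+1%:R * u0))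
   \bigcap_(i in [set: 'I_k]) B i (f i).
have mB : forall i j, measurable (B i j).
  by move=> i j; apply: measurable_funPTI; exact: lvl_measurable.
have mA1 : measurable A1 by apply: bigsetU_measurable => i _; exact: meas_gt.
have mI : forall f : {ffun 'I_k -> 'I_J.+1}, measurable (\bigcap_(i in [set: 'I_k]) B i (f i)).
  by move=> f; apply: fin_bigcap_measurable; [exact: finite_finset | move=> i _; exact: mB].
have mA2 : measurable A2 by apply: bigsetU_measurable => f _; exact: mI.
have cover : E `<=` A1 `|` A2.
  move=> w Ew; have hx := hE w Ew.
  case: (pselect (exists i : 'I_k, J.+1%:R * u0 * s < X i w)) => [[i hi]|hn].
    by left; apply: (@in_bigsetU _ _ _ _ i) => //; exact: mem_index_enum.
  right.
  have hle : forall i, X i w <= u0 * s * J.+1%:R.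
    move=> i; rewrite leNgt; apply/negP => h; apply: hn; exists i.
    by rewrite mulrAC -mulrA mulrC (mulrC s).
  have [f hf] := fin_all_exists (fun i => level_exists _ _ _ us0 (hle i)).
  apply: (@in_bigsetU _ _ _ _ [ffun i => f i]); first exact: mem_index_enum.
    have h1 : \sum_(i < k) X i w <= (\sum_(i < k) (([ffun i => f i] i).+1%:R * u0)) * s.
      rewrite mulr_suml; apply: ler_sum => i _; rewrite ffunE.
      rewrite (_ : (f i).+1%:R * u0 * s = u0 * s * (f i).+1%:R); last by ring.
      exact: lvl_le _ _ _ (hf i).
    by rewrite -(ltr_pM2r s0); apply: lt_le_trans h1.
  by move=> i _; rewrite /B /= ffunE; exact: hf.
have h0 : (P E <= P A1 + P A2)%E.
  apply: le_trans (measureU2 _ mA1 mA2).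
  by apply: le_measure => //; rewrite inE //; exact: measurableU.
have h1 : (P A1 <= (k%:R * expR (- (c * (J.+1%:R * u0) `^ a)))%:E)%E.
  apply: le_trans (union_bound _ _ _ _ (fun i => meas_gt _ _)) _.
  apply: le_trans (_ : _ <= \sum_(i < k) (expR (- (c * (J.+1%:R * u0) `^ a)))%:E)%E _.
    apply: lee_sum => i _; apply: tail.
    have : u0 <= J.+1%:R * u0 by rewrite ler_peMl ?ler1n //; lra.
    lra.
  by rewrite sumEFin sumr_const card_ord lee_fin [k%:R * _]mulr_natl.
set pn := fun (i : 'I_k) (j : nat) => fine (P (B i j)).
have eP : forall i j, P (B i j) = (pn i j)%:E.
  by move=> i j; rewrite fineK //; apply: fin_num_measure (mB i j).
have pn0 : forall i j, 0 <= pn i j by move=> i j; apply: fine_ge0; exact: measure_ge0.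
have h2 : (P A2 <= (expR (- (lam * x) + lam * Kc a c u0 * k%:R))%:E)%E.
  apply: le_trans (union_bound _ _ _ _ mI) _.
  rewrite (eq_bigr (fun f : {ffun 'I_k -> 'I_J.+1} => (\prod_(i < k) pn i (f i))%:E)); last first.
    move=> f _; rewrite /B (indep (fun i => lvl (u0 * s) (f i))); last first.
      by move=> i; exact: lvl_measurable.
    by rewrite -prodEFin; apply: eq_bigr => i _; exact: eP.
  rewrite sumEFin lee_fin.
  apply: (@real_LD R k J.+1 pn (fun j => j.+1%:R * u0) lam x (Kc a c u0) l0 pn0).
  move=> i; apply: factor_bound => //; try lra.
  - have := partition_sum (X i) (u0 * s) J us0.
    rewrite (eq_bigr (fun j : 'I_J.+1 => (pn i j)%:E)); last by move=> j _; exact: eP.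
    rewrite sumEFin => hs; rewrite -lee_fin hs.
    exact: probability_le1 (measurable_funPTI _ (measurable_itv _)).
  - move=> j /andP[j0 jJ]; rewrite -lee_fin -eP.
    apply: le_trans (tail i (j%:R * u0) _); last first.
      have : u0 <= j%:R * u0 by rewrite ler_peMl ?ler1n //; lra.
      lra.
    apply: le_measure; rewrite ?inE //; first exact: meas_gt.
    move=> w /= hw; have := lvl_gt _ _ _ j0 hw.
    by rewrite (_ : u0 * s * j%:R = j%:R * u0 * s) //; ring.
rewrite EFinD; apply: le_trans h0 _; exact: leeD.
Qed.


End Prob.



Section Final.
Variable R : realType.

Lemma powR_mul1 (y a : R) : 0 < y -> y `^ (a - 1) * y = y `^ a.
Proof.
move=> y0; rewrite -{2}(@powRr1 _ y); last lra.
by rewrite -powRD ?subrK //; apply/implyP => _; apply: lt0r_neq0.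
Qed.

Lemma ld_simplify (a c u0 K x : R) (J k : nat) :
  0 < a <= 1 -> 0 < c -> 1 <= u0 -> 0 <= K -> (0 < J)%N ->
  J%:R * u0 <= x -> x <= 2 * (J%:R * u0) -> 2 * K * k%:R <= x ->
  k%:R * expR (- (c * (J%:R * u0) `^ a)) +
  expR (- (c / 4 * (J%:R * u0) `^ (a - 1) * x) + c / 4 * (J%:R * u0) `^ (a - 1) * K * k%:R)
  <= (k%:R + 1) * expR (- (c / 8 * x `^ a)).
Proof.
move=> /andP[a0 a1] c0 u1 K0 J0 h1 h2 h3.
set y := J%:R * u0.
rewrite -/y in h1 h2.
have J1 : 1 <= J%:R :> R by rewrite ler1n.
have y1 : 1 <= y by rewrite /y -[1]mulr1; apply: ler_pM => //; lra.
have x0 : 0 < x by lra.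
rewrite mulrDl mul1r; apply: lerD.
  apply: ler_wpM2l; first by rewrite ler0n.
  rewrite ler_expR lerN2.
  have hx : x `^ a <= 2 * y `^ a.
    apply: le_trans (_ : (2 * y) `^ a <= _).
      by apply: ge0_ler_powR; rewrite ?nnegrE; lra.
    rewrite powRM; [|lra|lra].
    apply: ler_wpM2r; first exact: powR_ge0.
    apply: le_trans (_ : 2 `^ 1 <= _); last by rewrite powRr1 //; lra.
    by apply: ler_powR => //; lra.
  have : 0 <= c * y `^ a by apply: mulr_ge0; [lra | exact: powR_ge0].
  nra.
rewrite ler_expR.
set lam := c / 4 * y `^ (a - 1).
have hl : c / 4 * x `^ (a - 1) <= lam.
  rewrite /lam; apply: ler_wpM2l; first lra.
  by apply: powR_anti => //; lra.
have hlx : c / 4 * x `^ a <= lam * x.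
  rewrite -(powR_mul1 x a x0) mulrA; apply: ler_wpM2r => //; lra.
have l0 : 0 <= lam by apply: mulr_ge0; [lra | exact: powR_ge0].
have : lam * K * k%:R <= lam * x / 2.
  rewrite -mulrA -mulrA; apply: ler_wpM2l => //; lra.
lra.
Qed.


Lemma absorb (a c x : R) (k : nat) : 0 < a <= 1 -> 0 < c -> 2 <= x ->
  (32 / (a * c)) `^ (2 / a) <= x -> k%:R + 1 <= x ->
  (k%:R + 1) * expR (- (c / 8 * x `^ a)) <= expR (- (c / 16 * x `^ a)).
Proof.
move=> /andP[a0 a1] c0 x2 hX hk.
have x0 : 0 < x by lra.
set v := x `^ (a / 2).
have v0 : 0 < v by rewrite /v powR_gt0.
have hxa : x `^ a = v ^+ 2.
  by rewrite /v -powR_mulrn ?powR_ge0 // -powRrM; congr (_ `^ _); rewrite mulr2n; field.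
have hln : ln x = (2 / a) * ln v.
  rewrite /v ln_powR mulrA (_ : 2 / a * (a / 2) = 1) ?mul1r //.
  by field; apply/lt0r_neq0.
have hv : 32 / (a * c) <= v.
  have h0 : 0 < 32 / (a * c) by apply: divr_gt0 => //; apply: mulr_gt0.
  apply: le_trans (_ : ((32 / (a * c)) `^ (2 / a)) `^ (a / 2) <= v).
    rewrite -powRrM (_ : 2 / a * (a / 2) = 1) ?powRr1 //; [lra|].
    by field; apply/lt0r_neq0.
  apply: ge0_ler_powR; rewrite ?nnegrE //; [lra| exact: powR_ge0 |lra].
have hl : ln x <= c / 16 * x `^ a.
  rewrite hln hxa.
  have lv := @ln_le_id R v v0.
  have : 2 / a * ln v <= 2 / a * v by apply: ler_wpM2l => //; apply: divr_ge0; lra.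
  suff : 2 / a * v <= c / 16 * v ^+ 2 by lra.
  have -> : c / 16 * v ^+ 2 = v * (c / 16 * v) by rewrite expr2; ring.
  rewrite [2 / a * v]mulrC; apply: ler_wpM2l; first lra.
  have : c / 16 * (32 / (a * c)) = 2 / a by field; apply/andP; split; apply/lt0r_neq0.
  have : c / 16 * (32 / (a * c)) <= c / 16 * v by apply: ler_wpM2l => //; lra.
  lra.
have hxe : x <= expR (c / 16 * x `^ a).
  by rewrite -[X in X <= _](lnK (x:=x)) ?posrE // ler_expR.
apply: le_trans (_ : x * expR (- (c / 8 * x `^ a)) <= _).
  by apply: ler_wpM2r => //; exact: expR_ge0.
apply: le_trans (_ : expR (c / 16 * x `^ a) * expR (- (c / 8 * x `^ a)) <= _).
  by apply: ler_wpM2r => //; exact: expR_ge0.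
rewrite -expRD ler_expR; lra.
Qed.

Lemma theta_pow (a B th x : R) : 0 < a -> 0 < B -> 0 <= th -> 0 <= x ->
  th `^ (3 / 2) <= B * x -> th `^ (3 * a / 2) <= B `^ a * x `^ a.
Proof.
move=> a0 B0 th0 x0 h.
rewrite (_ : 3 * a / 2 = 3 / 2 * a); last by rewrite mulrAC.
rewrite powRrM -powRM; [|lra|lra].
apply: ge0_ler_powR; rewrite ?nnegrE; try done.
all: first [lra | exact: powR_ge0 | (apply: mulr_ge0; lra)].
Qed.


Lemma params (alpha c r0 u0 K A X0 th : R) (r : nat) :
  0 < alpha <= 1 -> 0 < c -> 1 <= u0 -> u0 <= K -> 1 <= A -> 2 * K <= A -> r0 < A -> 0 <= X0 ->
  r0 < r%:R -> A + X0 + u0 + 2 < th -> th < r%:R `^ (2 / 3) ->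
  let k := Num.truncn ((th / A) `^ (3 / 2)) in
  let x := th * k%:R `^ (3^-1) in
  let J := Num.truncn (x / u0) in
  (0 < k <= r)%N /\ r0 < r%:R / k%:R /\ (0 < J)%N /\ J%:R * u0 <= x /\ x <= 2 * (J%:R * u0) /\
  2 * K * k%:R <= x /\ k%:R + 1 <= x /\ X0 <= x /\ 2 <= x /\
  x * (r%:R / k%:R) `^ (3^-1) = th * r%:R `^ (3^-1) /\
  th `^ (3 / 2) <= 2 * A `^ (2^-1) * x.
Proof.
move=> ha c0 u1 Ku A1 A2K Ar0 X00 hr hth1 hth2 k x J.
have A0 : 0 < A by clear -A1; lra.
have thA : A <= th by clear -hth1 X00 u1; lra.
have thX : X0 <= th by clear -hth1 A1 u1; lra.
have thu : u0 <= th by clear -hth1 A1 X00; lra.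
have th2 : 2 <= th by clear -hth1 A1 X00 u1; lra.
have th0 : 0 < th by clear -th2; lra.
have r1 : 1 <= r%:R :> R.
  case: r hr hth2 => [|r] _ h; last by rewrite ler1n.
  have h0 : (0%:R : R) `^ (2 / 3) = 0 by rewrite powR0 //; apply: lt0r_neq0; clear -c0; lra.
  by rewrite h0 in h; clear -h th0; lra.
set q := th / A.
have q1 : 1 <= q by rewrite /q ler_pdivlMr // mul1r.
have thAq : th = A * q by rewrite /q mulrC divfK //; apply/lt0r_neq0.
have q32 : 1 <= q `^ (3 / 2).
  have h32 : (1 : R) <= 3 / 2 by clear -c0; lra.
  exact: (le_trans q1 (le1r_powR q1 h32)).
have k1 : (0 < k)%N by rewrite /k truncn_gt0.
have k1R : 1 <= k%:R :> R by rewrite ler1n.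
have kle : k%:R <= q `^ (3 / 2) by rewrite /k truncn_le; clear -q32; lra.
have klt : q `^ (3 / 2) < k.+1%:R by exact: truncnS_gt.
have th32 : th `^ (3 / 2) = A `^ (3 / 2) * q `^ (3 / 2) by rewrite thAq powRM //; clear -A0 q1; lra.
have AA : A <= A `^ (3 / 2) by apply: le1r_powR => //; clear -A1; lra.
have thr : th `^ (3 / 2) < r%:R.
  rewrite ltNge; apply/negP => h.
  have : (r%:R) `^ (2 / 3) <= (th `^ (3 / 2)) `^ (2 / 3).
    by apply: ge0_ler_powR; rewrite ?nnegrE; try (clear -h r1; lra); exact: powR_ge0.
  rewrite -powRrM (_ : 3 / 2 * (2 / 3) = 1 :> R); last by field.
  rewrite powRr1; clear -hth2 th0; lra.
have Akr : A * k%:R < r%:R.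
  apply: le_lt_trans thr; rewrite th32.
  apply: le_trans (_ : A `^ (3 / 2) * k%:R <= _).
    by apply: ler_wpM2r => //; clear -AA k1R; lra.
  by apply: ler_wpM2l => //; exact: powR_ge0.
have kr : (k <= r)%N.
  rewrite -(ler_nat R); apply: ltW; apply: le_lt_trans Akr.
  by rewrite -[X in X <= _]mul1r; apply: ler_wpM2r; clear -k1R A1; lra.
have hrk : r0 < r%:R / k%:R.
  apply: lt_trans Ar0 _; rewrite ltr_pdivlMr //; clear -Akr k1R; lra.
have k0r : (0 < k <= r)%N by rewrite k1 kr.
have k0 : 0 < k%:R :> R by clear -k1R; lra.
have hk13 : 1 <= k%:R `^ (3^-1) :> R.
  have h3 : (0 : R) <= 3^-1 by rewrite invr_ge0; clear -k1R; lra.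
  by have := ler_powR k1R h3; rewrite powRr0.
have xth : th <= x by rewrite /x -[X in X <= _]mulr1; apply: ler_wpM2l; clear -th0 hk13; lra.
have hxs : x * (r%:R / k%:R) `^ (3^-1) = th * r%:R `^ (3^-1).
  rewrite /x -mulrA -powRM; [|clear -k1R r1; lra|apply: divr_ge0; clear -k1R r1; lra].
  by rewrite [k%:R * _]mulrC divfK //; apply: lt0r_neq0.
have k23 : k%:R `^ (2 / 3) <= q.
  apply: le_trans (_ : (q `^ (3 / 2)) `^ (2 / 3) <= _).
    by apply: ge0_ler_powR; rewrite ?nnegrE; try (clear -k1R kle; lra); exact: powR_ge0.
  rewrite -powRrM (_ : 3 / 2 * (2 / 3) = 1 :> R); last by field.
  rewrite powRr1; clear -q1; lra.
have kk : k%:R `^ (2 / 3) * k%:R `^ (3^-1) = k%:R :> R.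
  rewrite -powRD; last by apply/implyP => _; apply: lt0r_neq0.
  rewrite (_ : 2 / 3 + 3^-1 = 1 :> R); last by field.
  by rewrite powRr1 //; clear -k1R; lra.
have Akx : A * k%:R <= x.
  have -> : x = A * (q * k%:R `^ 3^-1) by rewrite /x thAq mulrA.
  rewrite -{1}kk; apply: ler_wpM2l; first by clear -A0; lra.
  by apply: ler_wpM2r; [exact: powR_ge0 | exact: k23].
have Kkx : 2 * K * k%:R <= x.
  apply: le_trans Akx; apply: ler_wpM2r; clear -k1R A2K; lra.
have F6 : th `^ (3 / 2) <= 2 * A `^ (2^-1) * x.
  rewrite th32.
  have hA : A `^ (3 / 2) = A `^ (2^-1) * A.
    rewrite -{3}(@powRr1 _ A); last by clear -A0; lra.
    rewrite -powRD; last by apply/implyP => _; apply: lt0r_neq0.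
    by congr (_ `^ _); field.
  have hAp : 0 <= A `^ (2^-1) by exact: powR_ge0.
  have hk2 : k.+1%:R <= 2 * k%:R :> R by rewrite -natr1; clear -k1R; lra.
  apply: le_trans (_ : A `^ (3 / 2) * (2 * k%:R) <= _).
    by apply: ler_wpM2l; [exact: powR_ge0 | clear -klt hk2; lra].
  rewrite hA.
  have -> : A `^ 2^-1 * A * (2 * k%:R) = 2 * A `^ 2^-1 * (A * k%:R) by ring.
  by apply: ler_wpM2l => //; apply: mulr_ge0 => //; clear -hAp Akx; lra.
have u0p : 0 < u0 by clear -u1; lra.
have xu : 1 <= x / u0 by rewrite ler_pdivlMr // mul1r; clear -thu xth; lra.
have J1 : (0 < J)%N by rewrite /J truncn_gt0.
have J1R : 1 <= J%:R :> R by rewrite ler1n.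
have Jle : J%:R * u0 <= x.
  by rewrite -ler_pdivlMr // /J truncn_le; clear -xu; lra.
have Jge : x <= 2 * (J%:R * u0).
  have := truncnS_gt (x / u0); rewrite -/J ltr_pdivrMr // => h.
  have : J.+1%:R * u0 <= 2 * (J%:R * u0).
    by rewrite mulrA; apply: ler_wpM2r; [clear -u1; lra | rewrite -natr1; clear -J1R; lra].
  move=> h2; clear -h h2; lra.
have K0 : 0 <= K by clear -Ku u1; lra.
have hk1 : k%:R + 1 <= x.
  have : K * k%:R >= k%:R by rewrite -[X in X <= _]mul1r; apply: ler_wpM2r; clear -k1R Ku u1; lra.
  move=> h; clear -h Kkx k1R; lra.
have x2 : 2 <= x by clear -th2 xth; lra.
have xX : X0 <= x by clear -thX xth; lra.
by do ! split.
Qed.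

End Final.



Theorem proposition2p3 (R : realType) (c alpha theta0 r0 : R) :
  0 < alpha <= 1 -> 0 < c -> 0 <= theta0 ->
  exists theta0' : R, exists c' : R, 0 < c' /\
  forall (d : measure_display) (T : measurableType d) (P : probability T R)
    (Y : nat -> nat -> nat -> {RV P >-> R}) (Yr : nat -> {RV P >-> R}),
    (forall r k : nat, (0 < k <= r)%N ->
       mutually_independent P (fun i : 'I_k => (Y r k i : T -> R))) ->
    (forall (r k i : nat) (theta : R), (0 < k <= r)%N -> (i < k)%N ->
       r0 < r%:R / k%:R -> theta0 < theta ->
       (P [set w | (Y r k i w > theta * (r%:R / k%:R) `^ (3^-1))%R]
         <= (expR (- (c * theta `^ alpha)))%:E)%E) ->
    (forall (r k : nat), (0 < k <= r)%N -> r0 < r%:R / k%:R ->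
       forall w, Yr r w <= \sum_(i < k) Y r k i w) ->
    forall (r : nat) (theta : R), r0 < r%:R ->
      theta0' < theta -> theta < r%:R `^ (2 / 3) ->
      (P [set w | (Yr r w > theta * r%:R `^ (3^-1))%R]
        <= (expR (- (c' * theta `^ (3 * alpha / 2))))%:E)%E.
Proof.
move=> ha c0 th00.
have [a0 a1] := andP ha.
set u0 := theta0 + 1.
have u1 : 1 <= u0 by rewrite /u0; lra.
set K := Kc alpha c u0.
have Ku : u0 <= K.
  rewrite /K /Kc.
  have e1 := expR_ge1Dx (c * u0 / 4).
  have h1 : 0 <= c * u0 / 4 by apply: divr_ge0; [apply: mulr_ge0|]; lra.
  have h2 : 0 <= 4 * expR (18 / (alpha ^+ 2 * c)) by apply: mulr_ge0; [lra | exact: expR_ge0].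
  have h3 : u0 * 1 <= u0 * expR (c * u0 / 4) by apply: ler_wpM2l; lra.
  lra.
set A := 2 * K + `|r0| + 1.
have A1 : 1 <= A by rewrite /A; have := normr_ge0 r0; lra.
have A2K : 2 * K <= A by rewrite /A; have := normr_ge0 r0; lra.
have Ar0 : r0 < A by rewrite /A; have := ler_norm r0; lra.
set X0 := (32 / (alpha * c)) `^ (2 / alpha).
have X00 : 0 <= X0 by exact: powR_ge0.
set D := (2 * A `^ (2^-1)) `^ alpha.
have D0 : 0 < D by rewrite /D powR_gt0 // mulr_gt0 // powR_gt0 //; lra.
have K0 : 0 <= K by clear -Ku u1; lra.
exists (A + X0 + u0 + 2), (c / (16 * D)); split.
  by apply: divr_gt0 => //; apply: mulr_gt0 => //; lra.
move=> d T P Y Yr indep tail dom r th hr hth1 hth2.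
have th0 : 0 <= th by clear -hth1 A1 X00 u1; lra.
have := @params R alpha c r0 u0 K A X0 th r ha c0 u1 Ku A1 A2K Ar0 X00 hr hth1 hth2.
move=> [k0r [hrk [J1 [Jle [Jge [Kkx [hk1 [xX [x2 [hxs F6]]]]]]]]]].
set k := Num.truncn ((th / A) `^ (3 / 2)) in k0r hrk J1 Jle Jge Kkx hk1 xX x2 hxs F6 *.
set x := th * k%:R `^ (3^-1) in J1 Jle Jge Kkx hk1 xX x2 hxs F6 *.
set J := Num.truncn (x / u0) in J1 Jle Jge *.
have x0 : 0 <= x by clear -x2; lra.
set s : R := (r%:R / k%:R) `^ (3^-1) in hxs *.
have s0 : 0 < s.
  have [kp kr] := andP k0r.
  have rp : (0 < r)%N := leq_trans kp kr.
  by rewrite /s powR_gt0 // divr_gt0 // ltr0n.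
set E := [set w | th * r%:R `^ (3^-1) < Yr r w].
have mE : measurable E by exact: meas_gt.
have hE : forall w, E w -> x * s < \sum_(i < k) (fun i : 'I_k => Y r k i) i w.
  move=> w hw; rewrite hxs; apply: lt_le_trans hw _; exact: dom r k k0r hrk w.
have hLD := @LD d T R P alpha c theta0 k (fun i : 'I_k => Y r k i) s x J E ha c0 th00 s0 J1
  (indep r k k0r) (fun i t ht => tail r k i t k0r (ltn_ord i) hrk ht) mE hE.
apply: le_trans hLD _; rewrite lee_fin.
apply: le_trans (@ld_simplify R alpha c u0 K x J k ha c0 u1 K0 J1 Jle Jge Kkx) _.
apply: le_trans (@absorb R alpha c x k ha c0 x2 xX hk1) _.
rewrite ler_expR lerN2.
have Bp : 0 < 2 * A `^ (2^-1) by apply: mulr_gt0; [clear -A1; lra | apply: powR_gt0; clear -A1; lra].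
have := @theta_pow R alpha (2 * A `^ (2^-1)) th x a0 Bp th0 x0 F6.
rewrite -/D => ht.
apply: le_trans (_ : c / (16 * D) * (D * x `^ alpha) <= _).
  by apply: ler_wpM2l => //; apply: divr_ge0; clear -c0 D0; lra.
rewrite (_ : c / (16 * D) * (D * x `^ alpha) = c / 16 * x `^ alpha) //.
by field; apply/lt0r_neq0.
Qed.
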